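(* Let $m$ be a positive integer, let $G$ be a graph, and let $H = K_m \,\square\, G$ be the Cartesian product of the complete graph $K_m$ with $G$. Then $\chi_{td}(H) \leq m\,\chi_{td}(G) + \frac{m(m-1)}{2}$.
   Context: For a simple graph $G$ and a positive integer $k$, a proper $k$-total difference labeling of $G$ is a function $f: V(G)\to\{1,\dots,k\}$, extended to edges by $f(\{u,v\}) = |f(u)-f(v)|$, such that: (i) adjacent vertices receive different labels; (ii) two distinct edges sharing a vertex receive different labels; (iii) no edge receives the same label as either of its endpoints. $\chi_{td}(G)$ denotes the smallest $k$ for which such a labeling exists. The Cartesian product $G_1\,\square\, G_2$ has vertex set $V(G_1)\times V(G_2)$, with $(g_1,g_2)$ adjacent to $(g_1',g_2')$ iff either $g_1=g_1'$ and $g_2g_2'\in E(G_2)$, or $g_2=g_2'$ and $g_1g_1'\in E(G_1)$. *)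

(* Defs.v *)
From mathcomp Require Import all_boot.
Set Implicit Arguments. Unset Strict Implicit. Unset Printing Implicit Defensive.

Definition simple_graph (T : finType) (e : rel T) : Prop :=
  irreflexive e /\ symmetric e.

Definition absdiff (a b : nat) : nat := (a - b) + (b - a).

Definition proper_td_labeling (T : finType) (e : rel T) (k : nat) (f : T -> nat) : Prop :=
  (forall v, 1 <= f v <= k) /\
  (forall u v, e u v -> f u != f v) /\
  (forall u v w, e u v -> e u w -> v != w -> absdiff (f u) (f v) != absdiff (f u) (f w)) /\
  (forall u v, e u v -> absdiff (f u) (f v) != f u).

Definition has_td_labeling (T : finType) (e : rel T) (k : nat) : Prop :=
  exists f : T -> nat, proper_td_labeling e k f.

Definition is_chi_td (T : finType) (e : rel T) (k : nat) : Prop :=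
  0 < k /\ has_td_labeling e k /\
  forall k', 0 < k' -> has_td_labeling e k' -> k <= k'.

Definition complete_rel (m : nat) : rel 'I_m := fun i j => i != j.

Definition cart_prod (T1 T2 : finType) (e1 : rel T1) (e2 : rel T2) : rel (T1 * T2) :=
  fun x y => ((x.1 == y.1) && e2 x.2 y.2) || ((x.2 == y.2) && e1 x.1 y.1).

(* Main.v *)
Require Import Defs.
From mathcomp Require Import all_boot.
From mathcomp Require Import zify.
Set Implicit Arguments. Unset Strict Implicit. Unset Printing Implicit Defensive.


Definition cgood (n k : nat) (c : nat -> nat) : Prop :=
  c 0 = 0 /\
  (forall i j, i < j -> j <= n -> c i + k <= c j) /\
  (forall i j, i < j -> j <= n -> ~ (2 * c i < c j /\ c j <= 2 * c i + k)) /\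
  (forall a b d, a < b -> b < d -> d <= n -> c a + c d <> 2 * c b).

Lemma absdiff_addr a b x : absdiff (a + x) (b + x) = absdiff a b.
Proof. rewrite /absdiff; lia. Qed.
Lemma absdiff_addl a b x : absdiff (x + a) (x + b) = absdiff a b.
Proof. rewrite /absdiff; lia. Qed.

Lemma graph_lemma (m : nat) (T : finType) (e : rel T) (k : nat) (g : T -> nat) (c : nat -> nat) :
  0 < m -> simple_graph e -> proper_td_labeling e k g -> 0 < k -> cgood m.-1 k c ->
  proper_td_labeling (cart_prod (@complete_rel m) e) (k + c m.-1)
     (fun x => g x.2 + c (nat_of_ord x.1)).
Proof.
move=> m0 [eirr esym] [gb [g1 [g2 g3]]] k0 [c0 [cgap [cdbl c3]]].
have mono: forall i j, i <= j -> j <= m.-1 -> c i <= c j.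
  move=> i j; rewrite leq_eqVlt => /orP [/eqP -> //|ij] jn.
  by have := cgap i j ij jn; lia.
have ordle (i : 'I_m) : (i : nat) <= m.-1 by have := ltn_ord i; lia.
have dif: forall i j : 'I_m, i != j -> k <= absdiff (c i) (c j).
  move=> i j ij; rewrite /absdiff.
  have {}ij : (i : nat) != j by apply: contra ij => /eqP /val_inj ->.
  case: (ltngtP i j) => [lt|gt|eq]; last by rewrite eq eqxx in ij.
    by have := cgap _ _ lt (ordle j); lia.
  by have := cgap _ _ gt (ordle i); lia.
have gel: forall u v, e u v -> absdiff (g u) (g v) < k.
  move=> u v _; have := gb u; have := gb v; rewrite /absdiff; lia.
split; first by move=> [i v] /=; have := gb v; have := mono i m.-1 (ordle i) (leqnn _); lia.
rewrite /cart_prod /complete_rel.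
split.
  move=> [i u] [j v] /= /orP [/andP [/eqP <- euv]|/andP [/eqP <- ij]].
    by have := g1 _ _ euv; apply: contra => /eqP h; apply/eqP; lia.
  by have := dif _ _ ij; rewrite /absdiff => h; apply/eqP => h'; lia.
split.
  move=> [i u] [j v] [l w] /= h1 h2 hvw.
  case/orP: h1 => [/andP [/eqP ij euv]|/andP [/eqP uv ij]];
  case/orP: h2 => [/andP [/eqP il euw]|/andP [/eqP uw il]].
  - subst j l; rewrite !absdiff_addr; apply: g2 => //.
    by apply: contra hvw => /eqP ->.
  - subst j w; rewrite absdiff_addr absdiff_addl.
    have := gel _ _ euv; have := dif _ _ il; lia.
  - subst l v; rewrite absdiff_addr absdiff_addl.
    have := gel _ _ euw; have := dif _ _ ij; lia.
  - subst v w; rewrite !absdiff_addl.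
    have jl : j != l by apply: contra hvw => /eqP ->.
    move: ij il jl; rewrite -!val_eqE /=.
    have := ordle i; have := ordle j; have := ordle l.
    move: (nat_of_ord i) (nat_of_ord j) (nat_of_ord l) => a b d hd hb ha hij hil hjl.
    rewrite /absdiff.
    case: (ltngtP a b) => [ab|ba|eab]; last by rewrite eab eqxx in hij.
    + case: (ltngtP a d) => [ad|da|ead]; last by rewrite ead eqxx in hil.
      * case: (ltngtP b d) => [bd|db|ebd]; last by rewrite ebd eqxx in hjl.
        -- by have := cgap _ _ bd hd; have := cgap _ _ ab hb; lia.
        -- by have := cgap _ _ db hb; have := cgap _ _ ad hd; lia.
      * have := c3 _ _ _ da ab hb; have := cgap _ _ da ha; have := cgap _ _ ab hb; lia.
    + case: (ltngtP a d) => [ad|da|ead]; last by rewrite ead eqxx in hil.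
      * have := c3 _ _ _ ba ad hd; have := cgap _ _ ba ha; have := cgap _ _ ad hd; lia.
      * case: (ltngtP b d) => [bd|db|ebd]; last by rewrite ebd eqxx in hjl.
        -- by have := cgap _ _ bd hd; have := cgap _ _ da ha; lia.
        -- by have := cgap _ _ db hb; have := cgap _ _ ba ha; lia.
move=> [i u] [j v] /= /orP [/andP [/eqP ij euv]|/andP [/eqP uv ij]].
  subst j; rewrite absdiff_addr.
  case: (posnP (c i)) => [ci0|cipos].
    by rewrite ci0 addn0; apply: g3.
  have := gel _ _ euv; have := gb u.
  have: k <= c i.
    have i0: 0 < (i : nat) by apply/negP => /negP; rewrite -leqNgt leqn0 => /eqP h; rewrite h c0 in cipos.
    by have := cgap 0 i i0 (ordle i); rewrite c0.
  by move=> *; apply/eqP; lia.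
subst v; rewrite absdiff_addl.
have := gb u.
move: ij; rewrite -val_eqE /=; have := ordle i; have := ordle j.
move: (nat_of_ord i) (nat_of_ord j) => a b hb ha hab.
rewrite /absdiff.
case: (ltngtP a b) => [ab|ba|eab]; last by rewrite eab eqxx in hab.
  have := cdbl _ _ ab hb; have := cgap _ _ ab hb; move=> *; apply/eqP; lia.
have := cgap _ _ ba ha; move=> *; apply/eqP; lia.
Qed.


Lemma struct_good n k K (t : nat -> nat) :
  0 < k -> k <= K -> t 0 = 0 ->
  (forall i j, i < j -> j <= n -> t i + k <= (j - i) * K + t j) ->
  (forall i j, i < j -> j <= n -> j < 2 * i -> t j <= K + 2 * t i) ->
  (forall i, 0 < i -> 2 * i <= n -> t (2 * i) <= 2 * t i) ->
  (forall i, 2 * i + 1 <= n -> 2 * t i + k < K + t (2 * i + 1)) ->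
  (forall i j, 2 * i + 2 <= j -> j <= n -> 2 * t i + k < 2 * K + t j) ->
  (forall a b d, a < b -> b < d -> d <= n ->
      [/\ 2 * t b < K + t a + t d, t a + t d < K + 2 * t b &
          (a + d = 2 * b -> t a + t d <> 2 * t b)]) ->
  cgood n k (fun i => i * K + t i).
Proof.
move=> k0 kK t0 Hgap Hlo Heq Hone Hhi Htri.
split; first by rewrite t0.
split.
  move=> i j ij jn; have := Hgap _ _ ij jn.
  have -> : j * K = i * K + (j - i) * K by rewrite -mulnDl subnKC // ltnW.
  lia.
split.
  move=> i j ij jn [h1 h2].
  case: (ltngtP j (2 * i)) => [jlt|jgt|jeq].
  - have := Hlo _ _ ij jn jlt.
    have : j * K + K <= 2 * i * K by nia.
    lia.
  - case: (ltngtP j (2 * i + 1)) => [jlt'|jgt'|jeq'].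
    + lia.
    + have jg2 : 2 * i + 2 <= j by lia.
      have := Hhi i j jg2 jn.
      have : (2 * i + 2) * K <= j * K by nia.
      nia.
    + subst j; have := Hone i jn; nia.
  - subst j; have i0 : 0 < i by lia.
    have := Heq i i0 jn; nia.
move=> a b d ab bd dn h.
have [H1 H2 H3] := Htri _ _ _ ab bd dn.
case: (ltngtP (a + d) (2 * b)) => [lt|gt|eq].
- have : (a + d) * K + K <= 2 * b * K by nia.
  nia.
- have : 2 * b * K + K <= (a + d) * K by nia.
  nia.
- apply: (H3 eq).
  have : a * K + d * K = 2 * b * K by rewrite -mulnDl eq.
  nia.
Qed.


Lemma scheme_good n k (F : nat -> nat) : 16 <= n -> 0 < k ->
  (forall x, x <= n -> F x < (n + 2) %/ 6) ->
  (forall a b d, a < b -> b < d -> d <= n -> a + d = 2 * b -> F a + F d <> 2 * F b) ->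
  exists c, cgood n k c /\ c n <= n * k + (n * n.+1) %/ 2.
Proof.
move=> n16 k0 Fb Fm.
set al := (n + 2) %/ 6.
have al1 : 3 <= al by rewrite /al; lia.
have al6 : 6 * al <= n + 2 by rewrite /al; lia.
set t := fun i => if i == 0 then 0 else al + F i.
have tb : forall i, 0 < i -> i <= n -> al <= t i <= 2 * al - 1.
  move=> i i0 iN; rewrite /t; case: eqP => [e|_]; first lia.
  have := Fb i iN; lia.
have t0 : t 0 = 0 by [].
exists (fun i => i * (k + (3 * al - 1)) + t i); split.
  apply: struct_good => //.
  - lia.
  - move=> i j ij jn; have := tb j (leq_ltn_trans (leq0n i) ij) jn.
    have : k + (3 * al - 1) <= (j - i) * (k + (3 * al - 1)) by nia.
    case: (posnP i) => [->|i0]; first by rewrite t0; lia.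
    have := tb i i0 (ltnW (leq_trans ij jn)); lia.
  - move=> i j ij jn _; have := tb j (leq_ltn_trans (leq0n i) ij) jn; lia.
  - move=> i i0 hn; have := tb i i0 (leq_trans (leq_pmull _ (isT : 0 < 2)) hn).
    have := tb (2 * i) ltac:(lia) hn; lia.
  - move=> i hn; have := tb (2 * i + 1) ltac:(lia) hn.
    case: (posnP i) => [->|i0]; first by rewrite t0; lia.
    have := tb i i0 ltac:(lia); lia.
  - move=> i j hj jn; have := tb j ltac:(lia) jn.
    case: (posnP i) => [->|i0]; first by rewrite t0; lia.
    have := tb i i0 ltac:(lia); lia.
  - move=> a b d ab bd dn.
    have := tb b ltac:(lia) ltac:(lia); have := tb d ltac:(lia) dn.
    case: (posnP a) => [a0|a0].
      subst a; rewrite t0 => hd hb; split; [lia | lia | move=> _; lia].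
    have := tb a a0 ltac:(lia) => ha hd hb; split; [lia|lia|].
    move=> e; rewrite /t.
    have -> : (a == 0) = false by apply/eqP; lia.
    have -> : (b == 0) = false by apply/eqP; lia.
    have -> : (d == 0) = false by apply/eqP; lia.
    have := Fm _ _ _ ab bd dn e; lia.
have := tb n ltac:(lia) (leqnn n).
have h2 : 2 * (n * (3 * al - 1) + (2 * al - 1)) <= n * n.+1 by nia.
have : n * (3 * al - 1) + (2 * al - 1) <= (n * n.+1) %/ 2.
  by rewrite leq_divRL //; lia.
nia.
Qed.


Definition Wtab (a : nat) : seq nat :=
  match a with
  | 3 => [:: 1; 1; 0; 2; 0; 1; 1; 2; 0; 2; 0; 0; 2; 0; 2; 1; 1; 0; 2; 0; 1; 1]
  | 4 => [:: 0; 0; 1; 0; 0; 1; 1; 3; 3; 0; 0; 3; 3; 1; 1; 2; 1; 1; 3; 3; 2; 2; 3; 0; 0; 1; 0; 0]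
  | 5 => [:: 0; 0; 1; 0; 0; 1; 1; 3; 3; 0; 0; 1; 0; 0; 1; 1; 4; 3; 4; 4; 3; 1; 3; 4; 4; 3; 4; 0; 0; 1; 0; 0; 1; 1]
  | 6 => [:: 0; 0; 1; 0; 0; 1; 1; 3; 3; 0; 0; 1; 0; 0; 1; 1; 3; 3; 4; 3; 4; 1; 5; 2; 4; 5; 4; 0; 3; 0; 0; 2; 0; 1; 3; 2; 3; 5; 5; 0]
  | 7 => [:: 0; 0; 1; 0; 0; 1; 1; 3; 3; 0; 0; 1; 0; 0; 1; 1; 3; 3; 4; 3; 4; 1; 5; 2; 4; 5; 4; 0; 3; 0; 0; 2; 0; 1; 3; 2; 3; 5; 5; 0; 0; 1; 3; 3; 1; 2]
  | 8 => [:: 0; 0; 1; 0; 0; 1; 1; 3; 3; 0; 0; 1; 0; 0; 1; 1; 3; 3; 1; 3; 3; 4; 7; 4; 4; 7; 4; 0; 0; 1; 0; 0; 1; 1; 3; 3; 0; 0; 1; 0; 0; 1; 1; 3; 3; 1; 3; 3; 4; 7; 4; 4]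
  | 9 => [:: 0; 0; 1; 0; 0; 1; 1; 3; 3; 0; 0; 1; 0; 0; 1; 1; 3; 3; 1; 3; 3; 4; 4; 7; 4; 4; 8; 0; 0; 1; 0; 0; 1; 1; 3; 3; 0; 0; 1; 0; 0; 1; 1; 3; 3; 1; 3; 3; 4; 4; 7; 4; 4; 8; 8; 3; 3; 4]
  | 10 => [:: 0; 0; 1; 0; 0; 1; 1; 3; 3; 0; 0; 1; 0; 0; 1; 1; 3; 3; 1; 3; 3; 4; 4; 7; 4; 4; 8; 0; 0; 1; 0; 0; 1; 1; 3; 3; 0; 0; 1; 0; 0; 1; 1; 3; 3; 1; 3; 3; 4; 4; 7; 4; 4; 8; 8; 3; 3; 4; 4; 9; 4; 4; 9; 1]
  | _ => [::]
  end.

Definition mfb (s : seq nat) : bool :=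
  all (fun b => all (fun d => (b + d < size s) ==>
        (nth 0 s (b - d) + nth 0 s (b + d) != 2 * nth 0 s b)) (iota 1 b))
      (iota 0 (size s)).

Lemma mfbP s : mfb s -> forall a b d, a < b -> b < d -> d < size s -> a + d = 2 * b ->
  nth 0 s a + nth 0 s d <> 2 * nth 0 s b.
Proof.
move=> /allP H a b d ab bd ds e.
have bs : b \in iota 0 (size s) by rewrite mem_iota; lia.
have /allP H2 := H b bs.
have dd : (b - a) \in iota 1 b by rewrite mem_iota; lia.
have := H2 _ dd; have -> : b - (b - a) = a by lia.
have -> : b + (b - a) = d by lia.
by move=> /implyP /(_ ds) /eqP.
Qed.

Definition Wok (a : nat) : bool :=
  mfb (Wtab a) && all (fun x => x < a) (Wtab a) && (6 * a + 4 <= size (Wtab a)).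

Lemma Wtab_ok : all Wok (iota 3 8).
Proof. by vm_compute. Qed.

Fixpoint Ff (fuel n x : nat) : nat :=
  match fuel with
  | 0 => 0
  | S f => if n <= 63 then nth 0 (Wtab ((n + 2) %/ 6)) x
           else (if x %% 4 < 2 then 0 else 1) + 3 * Ff f (n %/ 4) (x %/ 4)
  end.

Definition uu (r : nat) := if r < 2 then 0 else 1.

Lemma uu_fact ra rb rd : ra < 4 -> rb < 4 -> rd < 4 -> (ra + rd) %% 4 = (2 * rb) %% 4 ->
  ra <> rb -> (uu ra + uu rd) %% 3 <> (2 * uu rb) %% 3.
Proof.
have H : all (fun ra => all (fun rb => all (fun rd =>
   ((ra + rd) %% 4 != (2 * rb) %% 4) || (ra == rb) ||
   ((uu ra + uu rd) %% 3 != (2 * uu rb) %% 3)) (iota 0 4)) (iota 0 4)) (iota 0 4) by [].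
move=> ha hb hd e ne.
have /allP H1 := allP H ra ltac:(rewrite mem_iota; lia).
have /allP H2 := H1 rb ltac:(rewrite mem_iota; lia).
have := H2 rd ltac:(rewrite mem_iota; lia).
rewrite e eqxx /=; case: eqP => //= _ /eqP //.
Qed.

Lemma Ff_good fuel : forall n, 16 <= n -> n <= fuel ->
  (forall x, x <= n -> Ff fuel n x < (n + 2) %/ 6) /\
  (forall a b d, a < b -> b < d -> d <= n -> a + d = 2 * b ->
      Ff fuel n a + Ff fuel n d <> 2 * Ff fuel n b).
Proof.
elim: fuel => [|f IH] n n16 nf; first by lia.
have E : forall x, Ff f.+1 n x = if n <= 63 then nth 0 (Wtab ((n + 2) %/ 6)) x
           else (if x %% 4 < 2 then 0 else 1) + 3 * Ff f (n %/ 4) (x %/ 4) by [].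
case: (leqP n 63) => n63.
  have {}E : forall x, Ff f.+1 n x = nth 0 (Wtab ((n + 2) %/ 6)) x by move=> x; rewrite E n63.
  set a := (n + 2) %/ 6.
  move: E; rewrite -/a => E.
  have ain : a \in iota 3 8 by rewrite mem_iota /a; lia.
  have /andP [/andP [mf bd] sz] := allP Wtab_ok a ain.
  have nsz : n < size (Wtab a) by rewrite /a in sz *; lia.
  split.
    by move=> x xn; rewrite E; apply: (allP bd); apply: mem_nth; exact: leq_ltn_trans xn nsz.
  move=> a' b' d' ab bd' dn e; rewrite !E; apply: (mfbP mf ab bd') => //; exact: leq_ltn_trans dn nsz.
have {}E : forall x, Ff f.+1 n x = (if x %% 4 < 2 then 0 else 1) + 3 * Ff f (n %/ 4) (x %/ 4).
  by move=> x; rewrite E leqNgt n63.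
have n4 : 16 <= n %/ 4 by lia.
have n4f : n %/ 4 <= f by lia.
have [IH1 IH2] := IH _ n4 n4f.
split.
  move=> x xn; rewrite E; have := IH1 (x %/ 4) ltac:(lia).
  case: ifP => _; lia.
move=> a b d ab bd dn e; rewrite !E.
have ab4 : a %/ 4 <= b %/ 4 by lia.
have bd4 : b %/ 4 <= d %/ 4 by lia.
case: (eqVneq (a %% 4) (b %% 4)) => [rab|rab].
  have e4 : a %/ 4 + d %/ 4 = 2 * (b %/ 4) by lia.
  have ab4' : a %/ 4 < b %/ 4 by lia.
  have bd4' : b %/ 4 < d %/ 4 by lia.
  have := IH2 _ _ _ ab4' bd4' ltac:(lia) e4.
  have rdb : d %% 4 = b %% 4 by lia.
  rewrite rab rdb; case: ifP => _; lia.
have := uu_fact (ltn_pmod a (isT : 0 < 4)) (ltn_pmod b (isT : 0 < 4)) (ltn_pmod d (isT : 0 < 4)) ltac:(lia) (elimN eqP rab).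
rewrite /uu.
case: ifP => _; case: ifP => _; case: ifP => _; lia.
Qed.


Definition Utab (n : nat) : seq nat :=
  if n <= 2 then [:: 0; 1; 1]
  else if n <= 6 then [:: 0; 2; 3; 5; 5; 7; 8]
  else if n <= 8 then [:: 0; 3; 5; 8; 9; 12; 14; 17; 17]
  else if n <= 14 then [:: 0; 4; 6; 9; 10; 13; 15; 19; 19; 23; 25; 28; 29; 32; 34]
  else [:: 0; 5; 8; 12; 14; 18; 21; 25; 27; 33; 35; 40; 41; 46; 48; 53].

Definition t1 (P Q e : nat) : bool := (Q <= P + e) || (Q - P <= e * ((Q - P + e) %/ e.+1)).
Lemma t1P P Q e k : t1 P Q e -> 0 < k -> ~ (P + e * k < Q /\ Q <= P + e.+1 * k).
Proof.
move=> /orP [h|h] k0 [h1 h2]; first by nia.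
have hk : (Q - P + e) %/ e.+1 <= k.
  by rewrite -ltnS ltn_divLR //; nia.
have : e * ((Q - P + e) %/ e.+1) <= e * k by rewrite leq_mul2l hk orbT.
lia.
Qed.

Definition t2 (P Q f : nat) : bool := (Q < P) || ((1 < f) && (Q - P < f.-1 * ((Q - P) %/ f).+1)).
Lemma t2P P Q f k : t2 P Q f -> 0 < f -> 0 < k -> ~ (P + f.-1 * k <= Q /\ Q < P + f * k).
Proof.
move=> /orP [h|/andP [f1 h]] f0 k0 [h1 h2]; first by lia.
have hk : (Q - P) %/ f < k by rewrite ltn_divLR //; nia.
have : f.-1 * ((Q - P) %/ f).+1 <= f.-1 * k by rewrite leq_mul2l hk orbT.
lia.
Qed.

Definition t3 (A B e : nat) : bool := (B < e + A) || ((B - A) %% e != 0).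
Lemma t3P A B e k : t3 A B e -> 0 < k -> e * k + A <> B.
Proof.
move=> /orP [h|h] k0 E; first by nia.
move: h; have -> : B - A = e * k by lia.
by rewrite modnMr eqxx.
Qed.

Definition symb (n : nat) (s : seq nat) : bool :=
  let t := nth 0 s in
  (t 0 == 0) &&
  all (fun j => all (fun i => (t i <= t j) &&
     (if j <= 2 * i then t1 (2 * t i) (t j) (2 * i - j) else t2 (t j) (2 * t i) (j - 2 * i)))
     (iota 0 j)) (iota 0 n.+1) &&
  all (fun d => all (fun b => all (fun a =>
     if a + d == 2 * b then t a + t d != 2 * t b
     else if 2 * b < a + d then t3 (t a + t d) (2 * t b) (a + d - 2 * b)
     else t3 (2 * t b) (t a + t d) (2 * b - (a + d)))
     (iota 0 b)) (iota 0 d)) (iota 0 n.+1).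

Lemma symbP n s k : symb n s -> 0 < k -> cgood n k (fun i => i * k + nth 0 s i).
Proof.
move=> /andP [/andP [/eqP t0 /allP H1] /allP H2] k0.
split; first by rewrite t0.
have P1 : forall i j, i < j -> j <= n ->
    (nth 0 s i <= nth 0 s j) &&
    (if j <= 2 * i then t1 (2 * nth 0 s i) (nth 0 s j) (2 * i - j)
     else t2 (nth 0 s j) (2 * nth 0 s i) (j - 2 * i)).
  move=> i j ij jn.
  have /allP := H1 j ltac:(rewrite mem_iota; lia).
  by move=> /(_ i ltac:(rewrite mem_iota; lia)).
split.
  move=> i j ij jn; have /andP [h _] := P1 i j ij jn.
  have : i * k + k <= j * k by nia.
  lia.
split.
  move=> i j ij jn [h1 h2]; have /andP [_ h] := P1 i j ij jn.
  case: ifP h => hj h.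
    apply: (t1P h k0).
    have E : 2 * i * k = j * k + (2 * i - j) * k by rewrite -mulnDl subnKC.
    split; rewrite mulnC; [|rewrite mulSn]; nia.
  have f0 : 0 < j - 2 * i by lia.
  apply: (t2P h f0 k0).
  have E : j * k = 2 * i * k + (j - 2 * i) * k by rewrite -mulnDl subnKC //; lia.
  have E2 : (j - 2 * i) * k = (j - 2 * i).-1 * k + k.
    by rewrite -{1}(prednK f0) mulSn addnC.
  split; rewrite mulnC; nia.
move=> a b d ab bd dn.
have /allP := H2 d ltac:(rewrite mem_iota; lia).
move=> /(_ b ltac:(rewrite mem_iota; lia)) /allP /(_ a ltac:(rewrite mem_iota; lia)).
case: eqP => [e|ne].
  move=> /eqP h E; apply: h.
  have : (a + d) * k = 2 * b * k by rewrite e.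
  nia.
case: ifP => lt h E.
  have e0 : 0 < a + d - 2 * b by lia.
  apply: (t3P h k0).
  have : (a + d) * k = 2 * b * k + (a + d - 2 * b) * k by rewrite -mulnDl subnKC //; lia.
  nia.
have e0 : 0 < 2 * b - (a + d) by lia.
apply: (t3P h k0).
have : 2 * b * k = (a + d) * k + (2 * b - (a + d)) * k by rewrite -mulnDl subnKC //; lia.
nia.
Qed.

Definition tabok (n : nat) : bool :=
  let s := Utab n in symb n s && (nth 0 s n <= (n * n.+1) %/ 2).

Lemma tab_all : all tabok (iota 0 16).
Proof. by []. Qed.

Lemma small_good n k : n <= 15 -> 0 < k ->
  exists c, cgood n k c /\ c n <= n * k + (n * n.+1) %/ 2.
Proof.
move=> n15 k0.
have /andP [S Bd] := allP tab_all n ltac:(rewrite mem_iota; lia).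
exists (fun i => i * k + nth 0 (Utab n) i); split; last by lia.
exact: symbP.
Qed.

Unset Implicit Arguments.

Lemma exists_c n k : 0 < k -> exists c, cgood n k c /\ c n <= n * k + (n * n.+1) %/ 2.
Proof.
move=> k0; case: (leqP n 15) => n15; first exact: small_good.
have [H1 H2] := Ff_good (n:=n) (fuel:=n) ltac:(lia) (leqnn n).
exact: (scheme_good (F := Ff n n)).
Qed.

Theorem mainTheorem11 (m : nat) (T : finType) (e : rel T) (kG kH : nat) :
  0 < m -> simple_graph e ->
  is_chi_td e kG ->
  is_chi_td (cart_prod (@complete_rel m) e) kH ->
  kH <= m * kG + (m * (m - 1)) %/ 2.
Proof.
move=> m0 sg [kG0 [[g gp] _]] [_ [_ kHmin]].
have [c [cg cb]] := exists_c m.-1 kG kG0.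
have L := graph_lemma m0 sg gp kG0 cg.
have := kHmin (kG + c m.-1) ltac:(lia) (ex_intro _ _ L).
have -> : m = m.-1.+1 by lia.
move: cb; rewrite succnK.
move: (m.-1) => n cb.
have -> : n.+1 * (n.+1 - 1) = n * n.+1 by rewrite subn1 /= mulnC.
lia.
Qed.
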